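(* Let $(x_n)$ be a nonincreasing interval-filling sequence of positive reals with cardinal function $f$, and let $k\ge1$ be an integer such that $\#\{n\in\mathbb{N}: r_n>x_n\}\le k$. Then $f(x)\le 2^{k+1}$ for every $x\in\mathcal{A}((x_n))$ (in particular $f$ takes only finite values).
   Context: For a summable sequence $\mathbf{x}=(x_n)$ of positive reals, $\mathcal{A}(\mathbf{x})=\{\sum_{n\in A}x_n: A\subseteq\mathbb{N}\}$ is its achievement set and its cardinal function $f$ assigns to $x\in\mathcal{A}(\mathbf{x})$ the cardinality (a positive integer, $\omega$, or $\mathfrak{c}$) of $\{(\varepsilon_n)\in\{0,1\}^{\mathbb{N}}:\sum\varepsilon_nx_n=x\}$. The sequence is interval-filling if $\mathcal{A}(\mathbf{x})$ is an interval (equivalently $x_n\le r_n$ for all $n$). The tail sums are $r_n=\sum_{k=n+1}^\infty x_k$. *)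

(* Defs.v *)
From mathcomp Require Import all_boot all_order all_algebra.
From mathcomp Require Import all_classical all_reals all_analysis.
Set Implicit Arguments. Unset Strict Implicit. Unset Printing Implicit Defensive.
Import Order.TTheory GRing.Theory Num.Theory.
Import numFieldNormedType.Exports.
Local Open Scope classical_set_scope.
Local Open Scope ring_scope.

Definition summable_seq {R : realType} (x : R ^nat) : Prop := cvg (series x @ \oo).

(* Tail sums r_n = sum_{k >= n+1} x_k. *)
Definition tail_sum {R : realType} (x : R ^nat) (n : nat) : R :=
  limn (fun m => \sum_(n.+1 <= k < m) x k).

Definition represents {R : realType} (x : R ^nat) (eps : nat -> bool) (s : R)
  : Prop := series (fun n => (eps n)%:R * x n) @ \oo --> s.

Definition achievement_set {R : realType} (x : R ^nat) : set R :=
  [set s | exists eps : nat -> bool, represents x eps s].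

(* Set of codings of s: its cardinality is the cardinal function f(s). *)
Definition codings {R : realType} (x : R ^nat) (s : R) : set (nat -> bool) :=
  [set eps | represents x eps s].

Definition interval_filling {R : realType} (x : R ^nat) : Prop :=
  is_interval (achievement_set x).

(* Main.v *)
Require Import Defs.
From mathcomp Require Import all_boot all_order all_algebra.
From mathcomp Require Import all_classical all_reals all_analysis.
From mathcomp Require Import lra.
Import Order.TTheory GRing.Theory Num.Theory.
Import numFieldNormedType.Exports.
Local Open Scope classical_set_scope.
Local Open Scope ring_scope.

Lemma pick_term (R : realType) (F : nat -> R) lo m j :
  (forall i, 0 <= F i) -> (lo <= j)%N -> (j < m)%N ->
  F j <= \sum_(lo <= i < m) F i.
Proof.
move=> F0 loj jm.
rewrite (big_cat_nat loj (ltnW jm)) /= [X in _ + X]big_ltn //.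
have A : 0 <= \sum_(lo <= i < j) F i by apply: sumr_ge0.
have B : 0 <= \sum_(j.+1 <= i < m) F i by apply: sumr_ge0.
lra.
Qed.

Lemma split_sum (R : realType) (F : nat -> R) n m : (n < m)%N ->
  \sum_(0 <= i < m) F i = \sum_(0 <= i < n) F i + F n + \sum_(n.+1 <= i < m) F i.
Proof.
move=> nm; rewrite (big_cat_nat (leq0n n.+1) nm) /= big_nat_recr //.
Qed.

Lemma key (R : realType) (x : R ^nat) (e e' : nat -> bool) s n :
  (forall n, 0 < x n) -> summable_seq x -> represents x e s -> represents x e' s ->
  (forall i, (i < n)%N -> e i = e' i) -> e n = true -> e' n = false ->
  tail_sum x n <= x n ->
  forall j, (n < j)%N -> e j = false /\ e' j = true.
Proof.
move=> xp sx ra rb eq_lt en e'n tx j nj.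
have x0 i : 0 <= x i by apply: ltW.
have Tc : cvgn [sequence \sum_(n.+1 <= k < m) x k]_m.
  by rewrite is_cvg_series_restrict.
set r := tail_sum x n.
have Tr : (fun m => \sum_(n.+1 <= k < m) x k) @ \oo --> r by exact: Tc.
set P := \sum_(0 <= i < n) (e i)%:R * x i.
have PE : \sum_(0 <= i < n) (e' i)%:R * x i = P.
  by apply: eq_big_nat => i /andP[_ ilt]; rewrite eq_lt.
have bnd i (b : bool) : 0 <= b%:R * x i <= x i.
  by case: b; rewrite /= ?mul1r ?mul0r lexx x0.
set a := if e j then x j else 0.
set d := if e' j then 0 else x j.
have H1 : P + x n + a <= s.
  apply: (cvgr_to_ge ra); near=> m.
  have jm : (j < m)%N by near: m; exists j.+1.
  rewrite /series /= (@split_sum _ _ _ _ (ltn_trans nj jm)) en mul1r.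
  rewrite -/P lerD2l; rewrite /a; case ej: (e j).
    have := @pick_term _ (fun i => (e i)%:R * x i) _ _ _ (fun i => proj1 (andP (bnd i (e i)))) nj jm.
    by rewrite /= ej mul1r.
  by apply: sumr_ge0 => i _; case/andP: (bnd i (e i)).
have H2 : s <= P + r - d.
  apply: (ler_cvg_to rb (cvgB (cvgD (cvg_cst P) Tr) (cvg_cst d))); near=> m.
  have jm : (j < m)%N by near: m; exists j.+1.
  rewrite /series /= (@split_sum _ _ _ _ (ltn_trans nj jm)) e'n mul0r addr0 PE.
  rewrite -addrA lerD2l /d; case ej: (e' j).
    rewrite subr0; apply: ler_sum => i _; by case/andP: (bnd i (e' i)).
  rewrite lerBrDr -lerBrDl -sumrB.
  have := @pick_term _ (fun i => x i - (e' i)%:R * x i) _ _ _ _ nj jm.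
  rewrite /= ej mul0r subr0; apply => i; rewrite subr_ge0; by case/andP: (bnd i (e' i)).
have xj := xp j.
move: H1 H2 tx; rewrite /a /d -/r; case: (e j); case: (e' j) => H1 H2 tx; try by split. all: exfalso; lra.
Unshelve. all: by end_near.
Qed.

Definition ev (e : nat -> bool) : bool :=
  asbool (exists N, forall i, (N < i)%N -> e i = false).

Lemma diff_ev (e e' : nat -> bool) n :
  (forall j, (n < j)%N -> e j = false /\ e' j = true) -> ev e <> ev e'.
Proof.
move=> H.
have -> : ev e = true.
  by apply/asboolP; exists n => i /H [].
move=> /esym /asboolP [N HN].
have := HN (maxn N n).+1 (leq_maxl N n).
by case: (H (maxn N n).+1 (leq_maxr N n)) => _ ->.
Qed.

Theorem theorem4p11 (R : realType) (x : R ^nat) (k : nat) :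
  (forall n, 0 < x n) ->
  summable_seq x ->
  (forall n, x n.+1 <= x n) ->
  interval_filling x ->
  (1 <= k)%N ->
  ([set n | x n < tail_sum x n] #<= `I_k)%card ->
  forall s, achievement_set x s ->
    (codings x s #<= `I_(2 ^ k.+1))%card.
Proof.
move=> xp sx _ _ _ /pcard_leP /injfunPex [g gF ginj] s _.
set F := [set n | x n < tail_sum x n] in gF ginj.
pose h (i : nat) : nat := xget 0 [set n | F n /\ g n = i].
have hg n : F n -> h (g n) = n.
  move=> Fn; have [Fm gm] := xgetI 0 (P := [set m | F m /\ g m = g n]) (conj Fn erefl).
  rewrite /h; apply: ginj; rewrite ?inE //=; exact: Fm.
pose phi (e : nat -> bool) : {ffun 'I_k -> bool} * bool :=
  ([ffun i : 'I_k => e (h (val i))], ev e).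
pose code (e : nat -> bool) : nat := val (enum_rank (phi e)).
apply/pcard_leP; apply/injfunPex; exists code.
  move=> e _ /=.
  have c : #|{: {ffun 'I_k -> bool} * bool}| = (2 ^ k.+1)%N.
    by rewrite card_prod card_ffun card_bool card_ord expnSr.
  rewrite /code -c; exact: ltn_ord.
move=> e e' /set_mem ce /set_mem ce' /val_inj /enum_rank_inj [effun eev].
apply: contrapT => ne.
have [n0 hn0] : exists n, e n != e' n.
  apply: contrapT => H; apply: ne; apply/funext => i.
  by apply/eqP; apply: contrapT => Hi; apply: H; exists i; apply/negP.
case: (ex_minnP (ex_intro (fun n => e n != e' n) n0 hn0)) => n hn nmin.
have eq_lt i : (i < n)%N -> e i = e' i.
  move=> lt; apply/eqP; apply: contraTT lt => Hi; rewrite -leqNgt; exact: nmin.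
have nF : tail_sum x n <= x n.
  rewrite leNgt; apply/negP => Fn.
  have gk : (g n < k)%N by exact: (gF n Fn).
  have := congr1 (fun f : {ffun 'I_k -> bool} => f (Ordinal gk)) effun.
  rewrite /= !ffunE /= hg //; by apply/eqP.
move: hn; case en: (e n); case e'n: (e' n) => // _.
  apply: (@diff_ev e e' n _ eev).
  exact: (@key _ _ _ _ _ _ xp sx ce ce' eq_lt en e'n nF).
apply: (@diff_ev e' e n _ (esym eev)).
apply: (@key _ _ _ _ _ _ xp sx ce' ce _ e'n en nF) => i /eq_lt ->; by [].
Qed.
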